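(* Let $e_1,e_2,e_3\in\mathbb{C}$ be pairwise distinct and let $\mathfrak{h}$ be a Lie subalgebra of finite codimension in $\mathfrak{R}_{e_1,e_2,e_3}$. Then every solvable ideal of $\mathfrak{h}$ is zero.
   Context: Work over $\mathbb{C}$. Let $E_{e_1,e_2,e_3}=\mathbb{C}[v_1,v_2,v_3]/I$, where $I$ is the ideal generated by $v_i^2-v_j^2+e_i-e_j$, $i,j=1,2,3$, and let $\hat v_i$ be the image of $v_i$. Let $\alpha_1,\alpha_2,\alpha_3$ be a basis of $\mathfrak{so}_3(\mathbb{C})$ with $[\alpha_1,\alpha_2]=\alpha_3$, $[\alpha_2,\alpha_3]=\alpha_1$, $[\alpha_3,\alpha_1]=\alpha_2$. The Lie algebra $\mathfrak{so}_3(\mathbb{C})\otimes_{\mathbb{C}}E_{e_1,e_2,e_3}$ has bracket $[\alpha\otimes h_1,\beta\otimes h_2]=[\alpha,\beta]\otimes h_1h_2$, and $\mathfrak{R}_{e_1,e_2,e_3}$ is its Lie subalgebra generated by $\alpha_i\otimes\hat v_i$, $i=1,2,3$. *)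

(* Defs.v *)
From HB Require Import structures.
From mathcomp Require Import all_boot all_algebra.
From mathcomp Require Import boolp.
From mathcomp Require Import Rstruct.
From mathcomp Require Import complex.
From mathcomp Require Import mpoly ring_quotient generic_quotient.
From mathcomp Require Import ring.

Set Implicit Arguments.
Unset Strict Implicit.
Unset Printing Implicit Defensive.
Import GRing.Theory Num.Theory.
Local Open Scope ring_scope.

Definition CC : numClosedFieldType := Rdefinitions.R[i].

(* The polynomial ring C[v1,v2,v3]; variable v_(i+1) is 'X_i, i : 'I_3. *)
Notation Pol := {mpoly CC[3]}.

Section Quotient_E.
Variables (e1 e2 e3 : CC).

Definition ee (i : 'I_3) : CC := [:: e1; e2; e3]`_i.

Definition gen_I (i j : 'I_3) : Pol := 'X_i ^+ 2 - 'X_j ^+ 2 + (ee i - ee j)%:MP.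

Definition in_I (p : Pol) : Prop :=
  exists q : 'I_3 -> 'I_3 -> Pol, p = \sum_i \sum_j q i j * gen_I i j.

Definition Ipred : {pred Pol} := fun p => `[< in_I p >].

Lemma Ipred_closed : idealr_closed Ipred.
Proof.
split.
- apply/asboolP; exists (fun _ _ => 0).
  by rewrite big1 // => i _; rewrite big1 // => j _; rewrite mul0r.
- apply/negP => /asboolP [q Hq].
  pose z (i : 'I_3) : CC := sqrtC (- ee i).
  have /(congr1 (meval z)) : (1 : Pol) = \sum_i \sum_j q i j * gen_I i j by [].
  rewrite meval1 raddf_sum big1; first by move/eqP; rewrite oner_eq0.
  move=> i _.
  rewrite raddf_sum big1 // => j _ /=.
  rewrite mevalM /gen_I mevalD mevalB mevalC !rmorphXn /= !mevalXU !sqrtCK.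
  rewrite [X in _ * X](_ : _ = 0) ?mulr0 //; ring.
- move=> a u v /asboolP [qu ->] /asboolP [qv ->]; apply/asboolP.
  exists (fun i j => a * qu i j + qv i j).
  rewrite mulr_sumr -big_split /=; apply: eq_bigr => i _.
  rewrite mulr_sumr -big_split /=; apply: eq_bigr => j _.
  by rewrite mulrDl mulrA.
Qed.

HB.instance Definition _ := isIdealr.Build Pol Ipred Ipred_closed.

Definition E := {ideal_quot Ipred}.

Definition toE (p : Pol) : E := (\pi_E p)%qT.

(* hat v_i, i = 1,2,3 (here indexed by 'I_3 = {0,1,2}) *)
Definition vhat (i : 'I_3) : E := toE 'X_i.

Definition scaleE (c : CC) (x : E) : E := toE c%:MP * x.

(* so_3(C) (x) E, written in the basis alpha_1, alpha_2, alpha_3 of so_3: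
   the triple (h1, h2, h3) stands for alpha_1(x)h1 + alpha_2(x)h2 + alpha_3(x)h3. *)
Definition L := (E * E * E)%type.

Definition Lmk (a b c : E) : L := (a, b, c).
Definition L1 (x : L) : E := x.1.1.
Definition L2 (x : L) : E := x.1.2.
Definition L3 (x : L) : E := x.2.

Definition L0 : L := Lmk 0 0 0.
Definition Ladd (x y : L) : L := Lmk (L1 x + L1 y) (L2 x + L2 y) (L3 x + L3 y).
Definition Lopp (x : L) : L := Lmk (- L1 x) (- L2 x) (- L3 x).
Definition Lscale (c : CC) (x : L) : L :=
  Lmk (scaleE c (L1 x)) (scaleE c (L2 x)) (scaleE c (L3 x)).

(* [alpha (x) h1, beta (x) h2] = [alpha, beta] (x) h1 h2, with
   [a1,a2] = a3, [a2,a3] = a1, [a3,a1] = a2, extended bilinearly. *)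
Definition Lbr (x y : L) : L :=
  Lmk (L2 x * L3 y - L3 x * L2 y)
      (L3 x * L1 y - L1 x * L3 y)
      (L1 x * L2 y - L2 x * L1 y).

Definition genR1 : L := Lmk (vhat 0) 0 0.
Definition genR2 : L := Lmk 0 (vhat 1) 0.
Definition genR3 : L := Lmk 0 0 (vhat 2).

Definition is_subspace (S : L -> Prop) : Prop :=
  [/\ S L0, (forall x y, S x -> S y -> S (Ladd x y))
    & (forall c x, S x -> S (Lscale c x))].

Definition is_lie_subalg (S : L -> Prop) : Prop :=
  is_subspace S /\ (forall x y, S x -> S y -> S (Lbr x y)).

Definition Ralg (x : L) : Prop :=
  forall S, is_lie_subalg S -> S genR1 -> S genR2 -> S genR3 -> S x.

Definition Lsum (s : seq L) : L := foldr Ladd L0 s.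
Definition in_span (s : seq L) (x : L) : Prop :=
  exists c : seq CC, size c = size s /\ x = Lsum [seq Lscale ci.1 ci.2 | ci <- zip c s].

(* h is a Lie subalgebra of finite codimension in R :
   h is contained in R and R/h is finite dimensional, i.e. there are finitely
   many w_1..w_n in R with R contained in h + span(w_1..w_n). *)
Definition finite_codim_in (Rs h : L -> Prop) : Prop :=
  exists s : seq L, (forall w, w \in s -> Rs w) /\
    forall x, Rs x -> exists y, h y /\ in_span s (Ladd x (Lopp y)).

Definition is_lie_ideal (h J : L -> Prop) : Prop :=
  [/\ is_subspace J, (forall x, J x -> h x)
    & (forall x y, h x -> J y -> J (Lbr x y))].

(* derived series: J^(0) = J, J^(k+1) = [J^(k), J^(k)] (linear span of brackets) *)
Fixpoint derived (J : L -> Prop) (k : nat) : L -> Prop :=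
  match k with
  | 0 => J
  | k'.+1 => fun z => forall S, is_subspace S ->
       (forall x y, derived J k' x -> derived J k' y -> S (Lbr x y)) -> S z
  end.

Definition is_solvable (J : L -> Prop) : Prop :=
  exists k, forall x, derived J k x -> x = L0.

End Quotient_E.

(* Main.v *)
Require Import Defs.
From HB Require Import structures.
From mathcomp Require Import all_boot all_algebra.
From mathcomp Require Import boolp Rstruct complex.
From mathcomp Require Import mpoly ring_quotient generic_quotient.
From mathcomp Require Import ring.
Set Implicit Arguments.
Unset Strict Implicit.
Unset Printing Implicit Defensive.
Import GRing.Theory Num.Theory.
Local Open Scope ring_scope.
Section Ev.
Variables e1 e2 e3 : CC.
Local Notation E := (E e1 e2 e3).
Local Notation ee := (ee e1 e2 e3).
Local Notation toE := (toE e1 e2 e3).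
Local Notation vhat := (vhat e1 e2 e3).

Definition piE : Pol -> E := (\pi_E)%qT.
Definition cE := piE \o (@mpolyC 3 CC).
Lemma toEpi p : toE p = piE p. Proof. by []. Qed.

Lemma piED p q : piE (p + q) = piE p + piE q. Proof. exact: rmorphD. Qed.
Lemma piEB p q : piE (p - q) = piE p - piE q. Proof. exact: rmorphB. Qed.
Lemma piEM p q : piE (p * q) = piE p * piE q. Proof. exact: rmorphM. Qed.
Lemma piEX p k : piE (p ^+ k) = piE p ^+ k. Proof. exact: rmorphXn. Qed.
Lemma cED a b : cE (a + b) = cE a + cE b. Proof. exact: rmorphD. Qed.
Lemma cEB a b : cE (a - b) = cE a - cE b. Proof. exact: rmorphB. Qed.
Lemma cEM a b : cE (a * b) = cE a * cE b. Proof. exact: rmorphM. Qed.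
Lemma cEN a : cE (- a) = - cE a. Proof. exact: rmorphN. Qed.
Lemma piEC c : piE c%:MP = cE c. Proof. by []. Qed.
Lemma cE1 : cE 1 = 1. Proof. exact: rmorph1. Qed.
Lemma cE0 : cE 0 = 0. Proof. exact: rmorph0. Qed.

Definition onCurve (z : 'I_3 -> CC) := forall i j, z i ^+ 2 - z j ^+ 2 + (ee i - ee j) = 0.

Lemma I_ev z p : onCurve z -> p \in Ipred e1 e2 e3 -> meval z p = 0.
Proof.
move=> Hz /asboolP [q ->].
rewrite raddf_sum big1 // => i _; rewrite raddf_sum big1 // => j _ /=.
by rewrite mevalM /gen_I mevalD mevalB mevalC !rmorphXn /= !mevalXU Hz mulr0.
Qed.

Definition ev z (x : E) : CC := meval z (repr x).

Lemma evE z p : onCurve z -> ev z (piE p) = meval z p.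
Proof.
move=> Hz; rewrite /ev /piE.
have : (repr ((\pi_E p)%qT : E) - p) \in Ipred e1 e2 e3.
  by rewrite Quotient.idealrBE reprK.
by move/(I_ev Hz); rewrite mevalB => /eqP; rewrite subr_eq0 => /eqP.
Qed.

Lemma piE_surj (x : E) : exists p, x = piE p.
Proof. by exists (repr x); rewrite /piE reprK. Qed.

Section EvZ.
Variable z : 'I_3 -> CC.
Hypothesis Hz : onCurve z.
Lemma evD x y : ev z (x + y) = ev z x + ev z y.
Proof.
have [p ->] := piE_surj x; have [q ->] := piE_surj y.
by rewrite -rmorphD !evE // mevalD.
Qed.
Lemma evM x y : ev z (x * y) = ev z x * ev z y.
Proof.
have [p ->] := piE_surj x; have [q ->] := piE_surj y.
by rewrite -rmorphM !evE // mevalM.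
Qed.
Lemma evN x : ev z (- x) = - ev z x.
Proof. by have [p ->] := piE_surj x; rewrite -rmorphN !evE // mevalN. Qed.
Lemma evB x y : ev z (x - y) = ev z x - ev z y.
Proof. by rewrite evD evN. Qed.
Lemma ev0 : ev z 0 = 0.
Proof. by rewrite -(rmorph0 piE) evE // meval0. Qed.
Lemma ev1 : ev z 1 = 1.
Proof. by rewrite -(rmorph1 piE) evE // meval1. Qed.
Lemma evC c : ev z (cE c) = c.
Proof. by rewrite /cE /= evE // mevalC. Qed.
Lemma evV i : ev z (vhat i) = z i.
Proof. by rewrite /vhat toEpi evE // mevalXU. Qed.
Lemma evX x k : ev z (x ^+ k) = ev z x ^+ k.
Proof. by elim: k => [|k IH]; rewrite ?expr0 ?ev1 // !exprS evM IH. Qed.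
Lemma ev_sum I (r : seq I) (P : pred I) (F : I -> E) :
  ev z (\sum_(i <- r | P i) F i) = \sum_(i <- r | P i) ev z (F i).
Proof. exact: (big_morph _ evD ev0). Qed.
End EvZ.

Lemma inI_0 p : p \in Ipred e1 e2 e3 -> piE p = 0.
Proof. by move=> H; apply/eqP; rewrite -(rmorph0 piE) /piE -Quotient.idealrBE subr0. Qed.

Lemma relv (i : 'I_3) : vhat i ^+ 2 = vhat 0 ^+ 2 + cE (ee 0 - ee i).
Proof.
have H : gen_I e1 e2 e3 i 0 \in Ipred e1 e2 e3.
  apply/asboolP; exists (fun a b => if a == i then (if b == 0 then 1 else 0) else 0).
  rewrite (eq_bigr (fun a => if a == i then gen_I e1 e2 e3 i 0 else 0)).
    by rewrite -big_mkcond big_pred1_eq.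
  move=> a _; case: eqP => [->|_]; last by rewrite big1 // => b _; rewrite mul0r.
  rewrite (eq_bigr (fun b => if b == 0 then gen_I e1 e2 e3 i 0 else 0)).
    by rewrite -big_mkcond big_pred1_eq.
  by move=> b _; case: eqP => [->|_]; rewrite ?mul1r ?mul0r.
move/inI_0: H; rewrite /gen_I piED !piEB !piEX !piEC => H.
rewrite /vhat !toEpi cEB; apply/eqP; rewrite -subr_eq0 -H; apply/eqP; ring.
Qed.

Definition P2E (A : {poly CC}) : E := (map_poly cE A).[vhat 0].
Lemma P2ED A B : P2E (A + B) = P2E A + P2E B.
Proof. by rewrite /P2E rmorphD hornerD. Qed.
Lemma P2EM A B : P2E (A * B) = P2E A * P2E B.
Proof. by rewrite /P2E rmorphM hornerM. Qed.
Lemma P2EC c : P2E c%:P = cE c.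
Proof. by rewrite /P2E map_polyC hornerC. Qed.
Lemma P2EX : P2E 'X = vhat 0.
Proof. by rewrite /P2E map_polyX hornerX. Qed.
Lemma P2E0 : P2E 0 = 0.
Proof. by rewrite -(polyC0) P2EC cE0. Qed.
Lemma evP2E z A : onCurve z -> ev z (P2E A) = A.[z 0].
Proof.
move=> Hz; elim/poly_ind: A => [|p c IH]; first by rewrite P2E0 ev0 // horner0.
by rewrite P2ED P2EM P2EX P2EC evD // evM // IH evV // evC // hornerD hornerM hornerX hornerC.
Qed.

Definition NF (x : E) := exists A B C D,
  x = P2E A + P2E B * vhat 1 + P2E C * vhat 2 + P2E D * vhat 1 * vhat 2.

Lemma NF0 : NF 0.
Proof. by exists 0, 0, 0, 0; rewrite P2E0; ring. Qed.
Lemma NFC c : NF (cE c).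
Proof. by exists c%:P, 0, 0, 0; rewrite P2E0 P2EC; ring. Qed.
Lemma NFD x y : NF x -> NF y -> NF (x + y).
Proof.
move=> [A [B [C [D ->]]]] [A' [B' [C' [D' ->]]]].
exists (A + A'), (B + B'), (C + C'), (D + D'); rewrite !P2ED; ring.
Qed.
Lemma NFMC c x : NF x -> NF (cE c * x).
Proof.
move=> [A [B [C [D ->]]]].
exists (c%:P * A), (c%:P * B), (c%:P * C), (c%:P * D); rewrite !P2EM P2EC; ring.
Qed.
Lemma NFMV i x : NF x -> NF (vhat i * x).
Proof.
move=> [A [B [C [D ->]]]].
have r1 := relv 1; have r2 := relv 2.
have P2EQ c : P2E ('X * 'X + c%:P) = vhat 0 ^+ 2 + cE c.
  by rewrite P2ED P2EM P2EX P2EC expr2.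
case: i => [[|[|[|//]]] Hi].
- exists ('X * A), ('X * B), ('X * C), ('X * D); rewrite !P2EM P2EX.
  have -> : Ordinal Hi = 0 by apply/val_inj.
  ring.
- exists (('X * 'X + (ee 0 - ee 1)%:P) * B), A, (('X * 'X + (ee 0 - ee 1)%:P) * D), C.
  rewrite !P2EM P2EQ -r1.
  have -> : Ordinal Hi = 1 by apply/val_inj.
  ring.
- exists (('X * 'X + (ee 0 - ee 2)%:P) * C), (('X * 'X + (ee 0 - ee 2)%:P) * D), A, B.
  rewrite !P2EM P2EQ -r2.
  have -> : Ordinal Hi = 2 by apply/val_inj.
  ring.
Qed.
Lemma NF1 : NF 1.
Proof. by rewrite -cE1; apply: NFC. Qed.
Lemma NF_all x : NF x.
Proof.
have [p ->] := piE_surj x.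
elim/mpolyind: p => [|c m p _ _ IH]; first by have := NFC 0; rewrite /cE /= rmorph0.
rewrite piED; apply: NFD => //.
rewrite -mul_mpolyC piEM piEC; apply: NFMC.
rewrite mpolyXE_id (big_morph _ piEM (rmorph1 piE)).
elim/big_rec: _ => [|i y _ Hy]; first exact: NF1.
rewrite piEX; elim: (m i) => [|k IHk]; first by rewrite expr0 mul1r.
by rewrite exprS -mulrA; apply: NFMV.
Qed.

Lemma poly_all0 (p : {poly CC}) : (forall t, p.[t] = 0) -> p = 0.
Proof.
move=> H; apply/eqP; apply/negPn/negP => Hp.
pose rs : seq CC := [seq i%:R | i <- iota 0 (size p)].
have Hall : all (root p) rs.
  by apply/allP => r /mapP [i _ ->]; apply/rootP; apply: H.
have Hu : uniq rs.
  by rewrite map_inj_uniq ?iota_uniq // => i j /eqP; rewrite eqr_nat => /eqP.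
by have := max_poly_roots Hp Hall Hu; rewrite size_map size_iota ltnn.
Qed.

Definition zz (t a b : CC) : 'I_3 -> CC := fun i => [:: t; a; b]`_i.

Lemma zz_curve t a b : a ^+ 2 = t ^+ 2 + (ee 0 - ee 1) -> b ^+ 2 = t ^+ 2 + (ee 0 - ee 2) ->
  onCurve (zz t a b).
Proof.
move=> Ha Hb i j; rewrite /zz.
case: i => [[|[|[|//]]] Hi]; case: j => [[|[|[|//]]] Hj]; rewrite /= ?Ha ?Hb /ee /=; ring.
Qed.

Lemma XnC_neq0 (c : CC) : 'X^2 + c%:P != 0 :> {poly CC}.
Proof. by rewrite -size_poly_eq0 size_XnaddC. Qed.

Lemma ev_inj x (Q : {poly CC}) : Q != 0 ->
  (forall z, onCurve z -> Q.[z 0] != 0 -> ev z x = 0) -> x = 0.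
Proof.
move=> HQ H.
have [A [B [C [D Hx]]]] := NF_all x.
set c1 := ee 0 - ee 1; set c2 := ee 0 - ee 2.
have evx t a b : a ^+ 2 = t ^+ 2 + c1 -> b ^+ 2 = t ^+ 2 + c2 ->
   ev (zz t a b) x = A.[t] + B.[t] * a + C.[t] * b + D.[t] * a * b.
  move=> Ha Hb; have Hz := zz_curve Ha Hb.
  by rewrite Hx !(evD Hz) !(evM Hz) !(evP2E _ Hz) !(evV Hz).
have key t : Q.[t] != 0 -> [/\ A.[t] = 0, B.[t] * (t ^+ 2 + c1) = 0,
     C.[t] * (t ^+ 2 + c2) = 0 & D.[t] * (t ^+ 2 + c1) * (t ^+ 2 + c2) = 0].
  move=> Qt.
  set s1 := sqrtC (t ^+ 2 + c1); set s2 := sqrtC (t ^+ 2 + c2).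
  have q1 : s1 ^+ 2 = t ^+ 2 + c1 by apply: sqrtCK.
  have q2 : s2 ^+ 2 = t ^+ 2 + c2 by apply: sqrtCK.
  have q1' : (- s1) ^+ 2 = t ^+ 2 + c1 by rewrite sqrrN.
  have q2' : (- s2) ^+ 2 = t ^+ 2 + c2 by rewrite sqrrN.
  have h11 := H _ (zz_curve q1 q2) Qt; rewrite evx // in h11.
  have h12 := H _ (zz_curve q1 q2') Qt; rewrite evx // in h12.
  have h21 := H _ (zz_curve q1' q2) Qt; rewrite evx // in h21.
  have h22 := H _ (zz_curve q1' q2') Qt; rewrite evx // in h22.
  set a0 := A.[t] in h11 h12 h21 h22 *; set b0 := B.[t] in h11 h12 h21 h22 *.
  set c0 := C.[t] in h11 h12 h21 h22 *; set d0 := D.[t] in h11 h12 h21 h22 *.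
  have four (y : CC) : y *+ 4 = 0 -> y = 0 by move/eqP; rewrite mulrn_eq0 /= => /eqP.
  have ea : a0 *+ 4 = (a0 + b0 * s1 + c0 * s2 + d0 * s1 * s2) +
      (a0 + b0 * s1 + c0 * - s2 + d0 * s1 * - s2) +
      (a0 + b0 * - s1 + c0 * s2 + d0 * - s1 * s2) +
      (a0 + b0 * - s1 + c0 * - s2 + d0 * - s1 * - s2) by ring.
  have eb : (b0 * s1) *+ 4 = (a0 + b0 * s1 + c0 * s2 + d0 * s1 * s2) +
      (a0 + b0 * s1 + c0 * - s2 + d0 * s1 * - s2) -
      (a0 + b0 * - s1 + c0 * s2 + d0 * - s1 * s2) -
      (a0 + b0 * - s1 + c0 * - s2 + d0 * - s1 * - s2) by ring.
  have ec : (c0 * s2) *+ 4 = (a0 + b0 * s1 + c0 * s2 + d0 * s1 * s2) -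
      (a0 + b0 * s1 + c0 * - s2 + d0 * s1 * - s2) +
      (a0 + b0 * - s1 + c0 * s2 + d0 * - s1 * s2) -
      (a0 + b0 * - s1 + c0 * - s2 + d0 * - s1 * - s2) by ring.
  have ed : (d0 * s1 * s2) *+ 4 = (a0 + b0 * s1 + c0 * s2 + d0 * s1 * s2) -
      (a0 + b0 * s1 + c0 * - s2 + d0 * s1 * - s2) -
      (a0 + b0 * - s1 + c0 * s2 + d0 * - s1 * s2) +
      (a0 + b0 * - s1 + c0 * - s2 + d0 * - s1 * - s2) by ring.
  rewrite h11 h12 h21 h22 !(addr0, subr0) in ea eb ec ed.
  move/four: ea => ->; move/four: eb => eb; move/four: ec => ec; move/four: ed => ed.
  split => //.
  - by rewrite -q1 expr2 mulrA eb mul0r.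
  - by rewrite -q2 expr2 mulrA ec mul0r.
  - rewrite -q1 -q2.
    have -> : d0 * s1 ^+ 2 * s2 ^+ 2 = (d0 * s1 * s2) * (s1 * s2) by ring.
    by rewrite ed mul0r.
pose W := Q * ('X^2 + c1%:P) * ('X^2 + c2%:P).
have HW : W != 0 by rewrite !mulf_neq0 // XnC_neq0.
have Z (Y : {poly CC}) : (forall t, Q.[t] != 0 -> (Y * ('X^2 + c1%:P) * ('X^2 + c2%:P)).[t] = 0) -> Y = 0.
  move=> HY; have : W * Y = 0.
    apply: poly_all0 => t; have [Qt|Qt] := eqVneq Q.[t] 0.
      by rewrite !hornerM Qt !mul0r.
    have -> : W * Y = Q * (Y * ('X^2 + c1%:P) * ('X^2 + c2%:P)) by rewrite /W; ring.
    by rewrite hornerM (HY t Qt) mulr0.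
  by move/eqP; rewrite mulf_eq0 (negbTE HW) => /eqP.
have HA : A = 0.
  by apply: Z => t /key [e _ _ _]; rewrite !hornerM e !mul0r.
have HB : B = 0.
  by apply: Z => t /key [_ e _ _]; rewrite !hornerM !hornerD hornerXn hornerC e mul0r.
have HC : C = 0.
  apply: Z => t /key [_ _ e _]; rewrite !hornerM !hornerD !hornerXn !hornerC.
  by rewrite -mulrA [_ * (t ^+ 2 + c2)]mulrC mulrA e mul0r.
have HD : D = 0.
  by apply: Z => t /key [_ _ _ e]; rewrite !hornerM !hornerD !hornerXn !hornerC e.
by rewrite Hx HA HB HC HD P2E0; ring.
Qed.
End Ev.

Section Lie.
Variables e1 e2 e3 : CC.
Local Notation L := (L e1 e2 e3).
Local Notation E := (E e1 e2 e3).
Local Notation L0 := (L0 e1 e2 e3).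
Local Notation cE := (@cE e1 e2 e3).
Local Notation ev := (@ev e1 e2 e3).
Local Notation onCurve := (@onCurve e1 e2 e3).

Definition Pproj (p : L -> E) :=
  [/\ forall x y, p (Ladd x y) = p x + p y, forall c x, p (Lscale c x) = cE c * p x,
      p L0 = 0 & forall x, p (Lopp x) = - p x].

Lemma Pproj1 : Pproj (@L1 e1 e2 e3). Proof. by []. Qed.
Lemma Pproj2 : Pproj (@L2 e1 e2 e3). Proof. by []. Qed.
Lemma Pproj3 : Pproj (@L3 e1 e2 e3). Proof. by []. Qed.

Lemma ev_span z p (s : seq L) (c : seq CC) : onCurve z -> Pproj p -> size c = size s ->
  ev z (p (Lsum [seq Lscale ci.1 ci.2 | ci <- zip c s])) =
  \sum_(j < size s) c`_j * ev z (p s`_j).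
Proof.
move=> Hz [pD pZ p0 pN]; elim: s c => [|x s IH] [|a c] //=.
- by move=> _; rewrite big_ord0 p0 ev0.
- case=> Hs; rewrite big_ord_recl /= pD pZ evD // evM // evC // IH //.
Qed.

Lemma ev_Lsum z p (T : Type) (r : seq T) (F : T -> L) : onCurve z -> Pproj p ->
  ev z (p (Lsum [seq F k | k <- r])) = \sum_(k <- r) ev z (p (F k)).
Proof.
move=> Hz [pD pZ p0 pN]; elim: r => [|a r IH] /=; first by rewrite big_nil p0 ev0.
by rewrite big_cons pD evD // IH.
Qed.

Lemma combo (h : L -> Prop) (u : nat -> L) : is_subspace h -> (forall k, Ralg (u k)) ->
  finite_codim_in (@Ralg e1 e2 e3) h ->
  exists n (d : 'I_n.+1 -> CC), (exists k, d k != 0) /\ exists w, h w /\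
    forall z, onCurve z -> forall p, Pproj p ->
      ev z (p w) = \sum_(k < n.+1) d k * ev z (p (u k)).
Proof.
move=> [h0 hD hZ] Hu [s [_ Hc]].
set n := size s.
have Hex : forall k : nat, exists yc : L * seq CC, [/\ h yc.1, size yc.2 = n &
   Ladd (u k) (Lopp yc.1) = Lsum [seq Lscale ci.1 ci.2 | ci <- zip yc.2 s]].
  move=> k; have [y [hy [c [Hcs Heq]]]] := Hc _ (Hu k).
  by exists (y, c).
have [f Hf] := choice Hex.
pose M : 'M[CC]_(n.+1, n) := \matrix_(k < n.+1, j < n) (f k).2`_j.
have HK : kermx M != 0.
  rewrite -mxrank_eq0 mxrank_ker; have := rank_leq_col M.
  by rewrite -/n; case: (\rank M) => [|r] Hr //=; rewrite subn_eq0 -ltnNge ltnS.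
have [i Hi] : exists i, row i (kermx M) != 0.
  case: (pselect (exists i, row i (kermx M) != 0)) => // Hn.
  move/negP: HK; case; apply/eqP/row_matrixP => i; rewrite row0.
  by apply/eqP; apply/negPn/negP => H; apply: Hn; exists i.
set dv := row i (kermx M).
have HdM : dv *m M = 0 by rewrite /dv -row_mul mulmx_ker row0.
exists n, (fun k => dv 0 k); split.
  case: (pselect (exists k, dv 0 k != 0)) => // Hn.
  move/negP: Hi; case; apply/eqP/matrixP => a b; rewrite ord1 [X in _ = X]mxE.
  by apply/eqP; apply/negPn/negP => H; apply: Hn; exists b.
exists (Lsum [seq Lscale (dv 0 k) (f k).1 | k <- index_enum 'I_n.+1]); split.
  elim: (index_enum _) => [|a r IH] //=.
  by apply: hD => //; apply: hZ; case: (Hf a).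
move=> z Hz p Hp; rewrite ev_Lsum //.
have [pD pZ p0 pN] := Hp.
have Hy (k : 'I_n.+1) : ev z (p (f k).1) = ev z (p (u k)) - \sum_(j < n) M k j * ev z (p s`_j).
  have [_ Hs Heq] := Hf k.
  have := congr1 (fun x => ev z (p x)) Heq; rewrite /= ev_span // pD pN evD // evN //.
  move=> E1.
  have -> : \sum_(j < n) M k j * ev z (p s`_j) =
      \sum_(j < size s) (f k).2`_j * ev z (p s`_j) by apply: eq_bigr => j _; rewrite mxE.
  rewrite -E1; ring.
transitivity (\sum_(k < n.+1) dv 0 k * ev z (p (u k)) -
   \sum_(j < n) (\sum_(k < n.+1) dv 0 k * M k j) * ev z (p s`_j)); last first.
  rewrite [X in _ - X](eq_bigr (fun=> 0)) ?big1_eq ?subr0 // => j _.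
  have E0 : (dv *m M) 0 j = 0 by rewrite HdM mxE.
  by move: E0; rewrite mxE => ->; rewrite mul0r.
have -> : \sum_(j < n) (\sum_(k < n.+1) dv 0 k * M k j) * ev z (p s`_j) =
   \sum_(k < n.+1) dv 0 k * \sum_(j < n) M k j * ev z (p s`_j).
  under eq_bigr do rewrite mulr_suml.
  rewrite exchange_big /=; apply: eq_bigr => k _; rewrite mulr_sumr.
  by apply: eq_bigr => j _; rewrite mulrA.
rewrite -sumrB; apply: eq_bigr => k _.
by rewrite pZ evM // evC // Hy mulrBr.
Qed.

Local Notation v := (vhat e1 e2 e3).

Lemma Ralg_sub : is_lie_subalg (@Ralg e1 e2 e3).
Proof.
split; first split.
- by move=> S [[S0 _ _] _] _ _ _.
- by move=> x y Hx Hy S HS g1 g2 g3; have [[_ SD _] _] := HS; apply: SD; [apply: Hx|apply: Hy].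
- by move=> c x Hx S HS g1 g2 g3; have [[_ _ SZ] _] := HS; apply: SZ; apply: Hx.
- by move=> x y Hx Hy S HS g1 g2 g3; have [_ SB] := HS; apply: SB; [apply: Hx|apply: Hy].
Qed.

Lemma Ralg_g1 : Ralg (genR1 e1 e2 e3). Proof. by move=> S _ H1 _ _. Qed.
Lemma Ralg_g2 : Ralg (genR2 e1 e2 e3). Proof. by move=> S _ _ H2 _. Qed.
Lemma Ralg_g3 : Ralg (genR3 e1 e2 e3). Proof. by move=> S _ _ _ H3. Qed.

Lemma Ralg_step (g x : L) : Ralg g -> Ralg x -> Ralg (Lscale (-1) (Lbr g (Lbr g x))).
Proof.
move=> Hg Hx; case: Ralg_sub => [[_ _ RZ] RB].
by apply: RZ; apply: (RB) => //; apply: (RB).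
Qed.

Definition F1 (k : nat) : L := Lmk (v 0 * (v 1 ^+ 2) ^+ k) 0 0.
Definition F2 k : L := Lmk 0 (v 1 * (v 2 ^+ 2) ^+ k) 0.
Definition F3 k : L := Lmk 0 0 (v 2 * (v 0 ^+ 2) ^+ k).

Lemma cEm1 : cE (-1) = -1. Proof. by rewrite cEN cE1. Qed.

Lemma Ralg_F1 k : Ralg (F1 k).
Proof.
elim: k => [|k IH].
  by rewrite /F1 expr0 mulr1; exact: Ralg_g1.
have -> : F1 k.+1 = Lscale (-1) (Lbr (genR2 e1 e2 e3) (Lbr (genR2 e1 e2 e3) (F1 k))).
  rewrite /F1 /Lscale /scaleE /Lbr /Lmk /L1 /L2 /L3 /genR2 /= toEpi piEC cEm1.
  congr (_, _, _); rewrite ?exprS; ring.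
by apply: Ralg_step => //; exact: Ralg_g2.
Qed.
Lemma Ralg_F2 k : Ralg (F2 k).
Proof.
elim: k => [|k IH].
  by rewrite /F2 expr0 mulr1; exact: Ralg_g2.
have -> : F2 k.+1 = Lscale (-1) (Lbr (genR3 e1 e2 e3) (Lbr (genR3 e1 e2 e3) (F2 k))).
  rewrite /F2 /Lscale /scaleE /Lbr /Lmk /L1 /L2 /L3 /genR3 /= toEpi piEC cEm1.
  congr (_, _, _); rewrite ?exprS; ring.
by apply: Ralg_step => //; exact: Ralg_g3.
Qed.
Lemma Ralg_F3 k : Ralg (F3 k).
Proof.
elim: k => [|k IH].
  by rewrite /F3 expr0 mulr1; exact: Ralg_g3.
have -> : F3 k.+1 = Lscale (-1) (Lbr (genR1 e1 e2 e3) (Lbr (genR1 e1 e2 e3) (F3 k))).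
  rewrite /F3 /Lscale /scaleE /Lbr /Lmk /L1 /L2 /L3 /genR1 /= toEpi piEC cEm1.
  congr (_, _, _); rewrite ?exprS; ring.
by apply: Ralg_step => //; exact: Ralg_g1.
Qed.

Lemma curve_sq z (i : 'I_3) : onCurve z -> z i ^+ 2 = z 0 ^+ 2 + (ee e1 e2 e3 0 - ee e1 e2 e3 i).
Proof. by move=> Hz; apply/eqP; rewrite -subr_eq0; have := Hz i 0; move=> <-; apply/eqP; ring. Qed.

Lemma diag (h : L -> Prop) (i j : 'I_3) (pm po1 po2 : L -> E) (u : nat -> L) :
  is_subspace h -> finite_codim_in (@Ralg e1 e2 e3) h ->
  Pproj pm -> Pproj po1 -> Pproj po2 -> (forall k, Ralg (u k)) ->
  (forall z k, onCurve z -> ev z (pm (u k)) = z i * (z j ^+ 2) ^+ k) ->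
  (forall z k, onCurve z -> ev z (po1 (u k)) = 0) ->
  (forall z k, onCurve z -> ev z (po2 (u k)) = 0) ->
  exists w, h w /\ exists Q : {poly CC}, Q != 0 /\ forall z, onCurve z ->
    [/\ ev z (po1 w) = 0, ev z (po2 w) = 0 & (Q.[z 0] != 0 -> ev z (pm w) != 0)].
Proof.
move=> Hh Hcod Pm P1 P2 Hu Em E1 E2.
have [n [d [[k0 Hk0] [w [hw Hw]]]]] := combo Hh Hu Hcod.
exists w; split => //.
pose P : {poly CC} := \poly_(k < n.+1) d (inord k).
have HP : P != 0.
  apply/negP => /eqP HP0; move/negP: Hk0; apply.
  have := congr1 (fun q : {poly CC} => q`_k0) HP0.
  by rewrite coef_poly ltn_ord inord_val coef0 => ->.
pose Q : {poly CC} := ('X^2 + (ee e1 e2 e3 0 - ee e1 e2 e3 i)%:P) *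
   (P \Po ('X^2 + (ee e1 e2 e3 0 - ee e1 e2 e3 j)%:P)) ^+ 2.
exists Q; split.
  rewrite mulf_neq0 ?XnC_neq0 // expf_neq0 // comp_poly_eq0 //.
  by rewrite size_XnaddC.
move=> z Hz; split.
- by rewrite Hw // big1 // => k _; rewrite E1 // mulr0.
- by rewrite Hw // big1 // => k _; rewrite E2 // mulr0.
have -> : ev z (pm w) = z i * P.[z j ^+ 2].
  rewrite Hw // horner_poly mulr_sumr; apply: eq_bigr => k _.
  by rewrite Em // inord_val mulrCA.
have -> : Q.[z 0] = (z i * P.[z j ^+ 2]) ^+ 2.
  rewrite /Q hornerM hornerD hornerXn hornerC horner_exp horner_comp hornerD hornerXn hornerC.
  by rewrite -(curve_sq i Hz) -(curve_sq j Hz) exprMn.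
by apply: contra => /eqP ->; rewrite expr0n.
Qed.

Lemma ev_br1 z a b : onCurve z -> ev z (L1 (Lbr a b)) =
  ev z (L2 a) * ev z (L3 b) - ev z (L3 a) * ev z (L2 b).
Proof. by move=> Hz; rewrite /= evB // !evM. Qed.
Lemma ev_br2 z a b : onCurve z -> ev z (L2 (Lbr a b)) =
  ev z (L3 a) * ev z (L1 b) - ev z (L1 a) * ev z (L3 b).
Proof. by move=> Hz; rewrite /= evB // !evM. Qed.
Lemma ev_br3 z a b : onCurve z -> ev z (L3 (Lbr a b)) =
  ev z (L1 a) * ev z (L2 b) - ev z (L2 a) * ev z (L1 b).
Proof. by move=> Hz; rewrite /= evB // !evM. Qed.

Lemma sq0 (a : CC) : a ^+ 2 = 0 -> a = 0.
Proof. by move/eqP; rewrite expf_eq0 /= => /eqP. Qed.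

Lemma abel_zero (h A : L -> Prop) : is_subspace h -> finite_codim_in (@Ralg e1 e2 e3) h ->
  (forall a b, A a -> A b -> Lbr a b = L0) ->
  (forall g x, h g -> A x -> A (Lbr g x)) -> forall x, A x -> x = L0.
Proof.
move=> Hh Hcod Hab HI x Ax.
have Z0 (F : nat -> L) (p : L -> E) : (forall k, p (F k) = 0) ->
    forall z k, onCurve z -> ev z (p (F k)) = 0.
  by move=> H z k Hz; rewrite H ev0.
have M1 z k : onCurve z -> ev z (L1 (F1 k)) = z 0 * (z 1 ^+ 2) ^+ k.
  by move=> Hz; rewrite /F1 /= evM // evX // evX // !evV.
have M2 z k : onCurve z -> ev z (L2 (F2 k)) = z 1 * (z 2 ^+ 2) ^+ k.
  by move=> Hz; rewrite /F2 /= evM // evX // evX // !evV.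
have M3 z k : onCurve z -> ev z (L3 (F3 k)) = z 2 * (z 0 ^+ 2) ^+ k.
  by move=> Hz; rewrite /F3 /= evM // evX // evX // !evV.
have [w1 [hw1 [Q1 [HQ1 Hw1]]]] := @diag h 0 1 (@L1 e1 e2 e3) (@L2 e1 e2 e3) (@L3 e1 e2 e3) F1
  Hh Hcod Pproj1 Pproj2 Pproj3 Ralg_F1 M1 (Z0 _ _ (fun k => erefl)) (Z0 _ _ (fun k => erefl)).
have [w2 [hw2 [Q2 [HQ2 Hw2]]]] := @diag h 1 2 (@L2 e1 e2 e3) (@L1 e1 e2 e3) (@L3 e1 e2 e3) F2
  Hh Hcod Pproj2 Pproj1 Pproj3 Ralg_F2 M2 (Z0 _ _ (fun k => erefl)) (Z0 _ _ (fun k => erefl)).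
have [w3 [hw3 [Q3 [HQ3 Hw3]]]] := @diag h 2 0 (@L3 e1 e2 e3) (@L1 e1 e2 e3) (@L2 e1 e2 e3) F3
  Hh Hcod Pproj3 Pproj1 Pproj2 Ralg_F3 M3 (Z0 _ _ (fun k => erefl)) (Z0 _ _ (fun k => erefl)).
have HQ : Q1 * Q2 * Q3 != 0 by rewrite !mulf_neq0.
have key z : onCurve z -> (Q1 * Q2 * Q3).[z 0] != 0 ->
    [/\ ev z (L1 x) = 0, ev z (L2 x) = 0 & ev z (L3 x) = 0].
  move=> Hz; rewrite !hornerM !mulf_eq0 !negb_or => /andP [/andP [q1 q2] q3].
  have [a1 a2 /(_ q1) l1] := Hw1 z Hz.
  have [b1 b2 /(_ q2) l2] := Hw2 z Hz.
  have [c1 c2 /(_ q3) l3] := Hw3 z Hz.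
  have E1 : ev z (L1 (Lbr (Lbr w1 x) x)) = 0 by rewrite (Hab _ _ (HI _ _ hw1 Ax) Ax) /= ev0.
  have E2 : ev z (L2 (Lbr (Lbr w2 x) x)) = 0 by rewrite (Hab _ _ (HI _ _ hw2 Ax) Ax) /= ev0.
  have E3 : ev z (L3 (Lbr (Lbr w3 x) x)) = 0 by rewrite (Hab _ _ (HI _ _ hw3 Ax) Ax) /= ev0.
  move: E1 E2 E3.
  rewrite !(ev_br1 _ _ Hz, ev_br2 _ _ Hz, ev_br3 _ _ Hz).
  rewrite a1 a2 b1 b2 c1 c2.
  set X1 := ev z (L1 x); set X2 := ev z (L2 x); set X3 := ev z (L3 x).
  set m1 := ev z (L1 w1); set m2 := ev z (L2 w2); set m3 := ev z (L3 w3).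
  move=> E1 E2 E3.
  have F1' : m1 * (X2 ^+ 2 + X3 ^+ 2) = 0 by apply/eqP; rewrite -oppr_eq0; apply/eqP; rewrite -E1; ring.
  have F2' : m2 * (X1 ^+ 2 + X3 ^+ 2) = 0 by apply/eqP; rewrite -oppr_eq0; apply/eqP; rewrite -E2; ring.
  have F3' : m3 * (X1 ^+ 2 + X2 ^+ 2) = 0 by apply/eqP; rewrite -oppr_eq0; apply/eqP; rewrite -E3; ring.
  move/eqP: F1'; rewrite mulf_eq0 (negbTE l1) /= => /eqP G1.
  move/eqP: F2'; rewrite mulf_eq0 (negbTE l2) /= => /eqP G2.
  move/eqP: F3'; rewrite mulf_eq0 (negbTE l3) /= => /eqP G3.
  have two (y : CC) : y *+ 2 = 0 -> y = 0 by move/eqP; rewrite mulrn_eq0 /= => /eqP.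
  split; apply: sq0; apply: two.
  - have -> : X1 ^+ 2 *+ 2 = (X1 ^+ 2 + X3 ^+ 2) + (X1 ^+ 2 + X2 ^+ 2) - (X2 ^+ 2 + X3 ^+ 2) by ring.
    by rewrite G1 G2 G3 subr0 addr0.
  - have -> : X2 ^+ 2 *+ 2 = (X2 ^+ 2 + X3 ^+ 2) + (X1 ^+ 2 + X2 ^+ 2) - (X1 ^+ 2 + X3 ^+ 2) by ring.
    by rewrite G1 G2 G3 subr0 addr0.
  - have -> : X3 ^+ 2 *+ 2 = (X2 ^+ 2 + X3 ^+ 2) + (X1 ^+ 2 + X3 ^+ 2) - (X1 ^+ 2 + X2 ^+ 2) by ring.
    by rewrite G1 G2 G3 subr0 addr0.
have x1 : L1 x = 0 by apply: (ev_inj HQ) => z Hz /(key z Hz) [].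
have x2 : L2 x = 0 by apply: (ev_inj HQ) => z Hz /(key z Hz) [].
have x3 : L3 x = 0 by apply: (ev_inj HQ) => z Hz /(key z Hz) [].
by move: x1 x2 x3; clear -x; case: x => [[a b] c]; rewrite /L1 /L2 /L3 /= => -> -> ->.
Qed.

Lemma Lbr_0r (g : L) : Lbr g L0 = L0.
Proof. rewrite /Lbr /L0 /Lmk /L1 /L2 /L3 /=; congr (_, _, _); ring. Qed.
Lemma Lbr_addr (g a b : L) : Lbr g (Ladd a b) = Ladd (Lbr g a) (Lbr g b).
Proof. rewrite /Lbr /Ladd /Lmk /L1 /L2 /L3 /=; congr (_, _, _); ring. Qed.
Lemma Lbr_scaler (g a : L) c : Lbr g (Lscale c a) = Lscale c (Lbr g a).
Proof. rewrite /Lbr /Lscale /scaleE /Lmk /L1 /L2 /L3 /=; congr (_, _, _); ring. Qed.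
Lemma Lbr_jacobi (g x y : L) : Lbr g (Lbr x y) = Ladd (Lbr (Lbr g x) y) (Lbr x (Lbr g y)).
Proof. rewrite /Lbr /Ladd /Lmk /L1 /L2 /L3 /=; congr (_, _, _); ring. Qed.

Lemma derived_ideal (h J : L -> Prop) k : is_lie_ideal h J -> is_lie_ideal h (derived J k).
Proof.
move=> HJ; elim: k => [//|k [[D0 DD DZ] Dh DI]] /=.
have Dbr : forall a b, derived J k a -> derived J k b -> derived J k (Lbr a b).
  by move=> a b Ha Hb; apply: DI => //; apply: Dh.
have sub' : forall z, (forall S, is_subspace S ->
    (forall x y, derived J k x -> derived J k y -> S (Lbr x y)) -> S z) -> derived J k z.
  by move=> z Hz; apply: Hz => //; split.
have D'sub : is_subspace (fun z => forall S, is_subspace S ->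
    (forall x y, derived J k x -> derived J k y -> S (Lbr x y)) -> S z).
  split.
  - by move=> S [S0 _ _].
  - by move=> x y Hx Hy S HS HB; have [_ SD _] := HS; apply: SD; [apply: Hx|apply: Hy].
  - by move=> c x Hx S HS HB; have [_ _ SZ] := HS; apply: SZ; apply: Hx.
split => //.
- by move=> z Hz; apply: Dh; apply: sub'.
move=> g z hg Hz S HS HB.
have [S0 SD SZ] := D'sub.
apply: (Hz (fun t => forall S, is_subspace S ->
    (forall x y, derived J k x -> derived J k y -> S (Lbr x y)) -> S (Lbr g t))).
- split.
  + by move=> S' HS' _; rewrite Lbr_0r; have [] := HS'.
  + by move=> a b Ha Hb S' HS' HB'; rewrite Lbr_addr; have [_ SD' _] := HS'; apply: SD'; [apply: Ha|apply: Hb].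
  + by move=> c a Ha S' HS' HB'; rewrite Lbr_scaler; have [_ _ SZ'] := HS'; apply: SZ'; apply: Ha.
- move=> a b Ha Hb S' HS' HB'; rewrite Lbr_jacobi.
  have [_ SD' _] := HS'; apply: SD'; apply: HB' => //; apply: DI => //.
- exact: HS.
- exact: HB.
Qed.

Lemma derived_succ (J : L -> Prop) k a b : derived J k a -> derived J k b -> derived J k.+1 (Lbr a b).
Proof. by move=> Ha Hb S HS HB; apply: HB. Qed.

End Lie.

Unset Implicit Arguments.

Theorem lemma6p4 (e1 e2 e3 : CC) (h : L e1 e2 e3 -> Prop) :
  e1 != e2 -> e1 != e3 -> e2 != e3 ->
  is_lie_subalg h ->
  (forall x, h x -> Ralg x) ->
  finite_codim_in (@Ralg e1 e2 e3) h ->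
  forall J : L e1 e2 e3 -> Prop,
    is_lie_ideal h J -> is_solvable J ->
    forall x, J x -> x = L0 e1 e2 e3.
Proof.
move=> _ _ _ [Hh _] _ Hcod J HJ [k Hk].
have step : forall m, (m <= k)%N -> forall x, derived J (k - m)%N x -> x = L0 e1 e2 e3.
  elim=> [|m IH] Hm; first by rewrite subn0.
  have Hkm : (k - m = (k - m.+1).+1)%N by rewrite subnS prednK // subn_gt0.
  have [_ _ DI] := derived_ideal (k - m.+1)%N HJ.
  apply: (abel_zero Hh Hcod) => // a b Ha Hb.
  by apply: IH; [apply: ltnW | rewrite Hkm; apply: derived_succ].
by move=> x Jx; apply: (step k (leqnn k)); rewrite subnn.
Qed.
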